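(* Let $r\geq0$ be an integer and $T\in\overline{\mathrm{Sub}}(X,1)$ with $T\subset B(1,r)$. Let $T_1,T_2\in\mathcal{R}_{r+1}$ with $T_1\cap T_2=T$. Let $(\Delta_1,\tau_1),(\Delta_2,\tau_2)$ be $R_N$-core graphs and $v_i\in V(\Delta_i)$. If there are based occurrences $f_i\colon(T_i,1)\to(\Delta_i,v_i)$ ($i=1,2$), then the connected component $\Gamma$ of $\Delta_1\times_{R_N}\Delta_2$ containing $(v_1,v_2)$ is $R_N$-graph isomorphic to $T$ (via $x\mapsto(f_1(x),f_2(x))$); in particular $\Gamma$ is contractible.
   Context: $N\ge2$, $F_N$ free with free basis $A$, $X$ its Cayley graph (a tree with vertex set $F_N$, unit edge lengths, metric $d_X$), $B(1,r)=\{x\in X:d_X(1,x)\le r\}$, $R_N=F_N\backslash X$ the rose, $q\colon X\to R_N$ the projection. An $R_N$-graph is a graph with a graph morphism $\tau$ to $R_N$ (edges labeled by $A$ and oriented); $R_N$-graph morphisms commute with the maps to $R_N$. An $R_N$-core graph is a finite $R_N$-graph with $\tau$ locally injective and no vertices of degree $0$ or $1$. Subtrees of $X$ are $R_N$-graphs via $q$. $\overline{\mathrm{Sub}}(X,1)$: finite subtrees of $X$ containing $1$ (including $\{1\}$). For $r\ge1$, $\mathcal{R}_r$: finite subtrees $T'\ni1$ in which $1$ has degree $\geq2$ and every degree-one vertex lies at distance exactly $r$ from $1$. A based occurrence $(T',1)\to(\Delta,v)$ of a finite subtree $T'$ is an $R_N$-graph morphism sending $1\mapsto v$ and preserving the degree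 of every vertex of $T'$ of degree $\ge2$. The fiber product $\Delta_1\times_{R_N}\Delta_2$ has vertex set $V(\Delta_1)\times V(\Delta_2)$ and, for each pair of edges $e_1,e_2$ with the same label $a$ (oriented compatibly), an edge labeled $a$ from $(o(e_1),o(e_2))$ to $(t(e_1),t(e_2))$. *)

(* Defs.v *)
From mathcomp Require Import all_boot.
Set Implicit Arguments. Unset Strict Implicit. Unset Printing Implicit Defensive.

(* Free basis A = 'I_N.  A letter of A^{+-1}: (a, true) = a, (a, false) = a^-1. *)
Definition letter (N : nat) := ('I_N * bool)%type.
Definition linv N (x : letter N) : letter N := (x.1, ~~ x.2).

(* Elements of F_N = vertices of the Cayley tree X: reduced words. *)
Definition word N := seq (letter N).
Definition reduced N (w : word N) : bool := sorted (fun x y => y != linv x) w.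

Definition rmul N (w : word N) (x : letter N) : word N :=
  if (0 < size w) && (nth x w (size w).-1 == linv x)
  then take (size w).-1 w else rcons w x.

Definition adjX N (g h : word N) : bool := [exists x : letter N, h == rmul g x].

(* A finite subtree of X containing 1, given by its (finite) vertex set
   (subtrees of a tree are the induced subgraphs on connected vertex sets). *)
Definition subtree1 N (T : seq (word N)) : Prop :=
  [/\ [::] \in T, all (@reduced N) T &
      forall w, w \in T ->
        exists p : seq (word N), [/\ path (@adjX N) [::] p, last [::] p = w
                                   & all (fun u => u \in T) p]].

Definition tedge N (T : seq (word N)) (a : 'I_N) (g h : word N) : bool :=
  [&& g \in T, h \in T & h == rmul g (a, true)].

Definition tdeg N (T : seq (word N)) (g : word N) : nat :=
  #|[set x : letter N | rmul g x \in T]|.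

Definition Rr N (r : nat) (T : seq (word N)) : Prop :=
  [/\ subtree1 T, 2 <= tdeg T [::] &
      forall w, w \in T -> tdeg T w = 1 -> size w = r].

(* A finite R_N-graph with locally injective labelling: a finite vertex type V
   and, for each a in A, the relation e a u w = "there is an edge u --a--> w".
   Local injectivity means at most one outgoing and one incoming a-edge at
   each vertex, so edges are determined by these relations. *)
Definition locinj N (V : finType) (e : 'I_N -> rel V) : Prop :=
  forall a, (forall u w w', e a u w -> e a u w' -> w = w') /\
            (forall u u' w, e a u w -> e a u' w -> u = u').

(* degree of a vertex (loops count twice) *)
Definition gdeg N (V : finType) (e : 'I_N -> rel V) (v : V) : nat :=
  #|[set a | [exists w, e a v w]]| + #|[set a | [exists u, e a u v]]|.

Definition core_graph N (V : finType) (e : 'I_N -> rel V) : Prop :=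
  locinj e /\ forall v, 2 <= gdeg e v.

Definition based_occ N (T : seq (word N)) (V : finType) (e : 'I_N -> rel V)
    (v : V) (f : word N -> V) : Prop :=
  [/\ f [::] = v,
      forall a g h, tedge T a g h -> e a (f g) (f h) &
      forall g, g \in T -> 2 <= tdeg T g -> gdeg e (f g) = tdeg T g].

Definition prod_edge N (V1 V2 : finType) (e1 : 'I_N -> rel V1)
    (e2 : 'I_N -> rel V2) (a : 'I_N) : rel (V1 * V2) :=
  fun p q => e1 a p.1 q.1 && e2 a p.2 q.2.

Definition prod_adj N (V1 V2 : finType) (e1 : 'I_N -> rel V1)
    (e2 : 'I_N -> rel V2) : rel (V1 * V2) :=
  fun p q => [exists a, prod_edge e1 e2 a p q || prod_edge e1 e2 a q p].

(* Main.v *)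
Require Import Defs.
From mathcomp Require Import all_boot.
From mathcomp Require Import zify.
Set Implicit Arguments. Unset Strict Implicit. Unset Printing Implicit Defensive.

Lemma linvK N (x : letter N) : linv (linv x) = x.
Proof. by case: x => a b; rewrite /linv /= negbK. Qed.

Lemma linv_neq N (x : letter N) : linv x != x.
Proof. by case: x => a b; rewrite /linv /= xpair_eqE eqxx /=; case: b. Qed.

Lemma linv_inj N : injective (@linv N).
Proof. by move=> x y /(congr1 (@linv N)); rewrite !linvK. Qed.

Lemma rmul_nil N (m : letter N) : rmul [::] m = [:: m].
Proof. by []. Qed.

Lemma rmul_rcons_inv N (p : word N) a : rmul (rcons p a) (linv a) = p.
Proof.
rewrite /rmul size_rcons /= nth_rcons ltnn eqxx linvK eqxx /=.
by rewrite -cats1 takel_cat // take_size.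
Qed.

Lemma rmul_rcons_other N (p : word N) a m :
  m != linv a -> rmul (rcons p a) m = rcons (rcons p a) m.
Proof.
move=> hm; rewrite /rmul size_rcons /= nth_rcons ltnn eqxx.
case: eqP => // h; case/eqP: hm; by rewrite h linvK.
Qed.

Lemma rmul_cases N (w : word N) m :
  rmul w m = rcons w m \/ w = rcons (rmul w m) (linv m).
Proof.
case/lastP: w => [|p a]; first by left.
case: (eqVneq m (linv a)) => [->|h]; last by left; apply: rmul_rcons_other.
by right; rewrite rmul_rcons_inv linvK.
Qed.

Lemma reduced_rcons N (p : word N) a :
  reduced (rcons p a) = reduced p && ((p == [::]) || (a != linv (last a p))).
Proof.
rewrite /reduced; case: p => [|x p] //=.
by rewrite rcons_path andbC.
Qed.

Lemma reduced_rconsl N (p : word N) a : reduced (rcons p a) -> reduced p.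
Proof. by rewrite reduced_rcons => /andP[]. Qed.

Lemma rmul_reduced N (w : word N) m : reduced w -> reduced (rmul w m).
Proof.
case/lastP: w => [|p a] // hr.
case: (eqVneq m (linv a)) => [->|h].
  by rewrite rmul_rcons_inv; apply: reduced_rconsl hr.
by rewrite rmul_rcons_other // reduced_rcons hr last_rcons h orbT.
Qed.

Lemma rmulK N (w : word N) m : reduced w -> rmul (rmul w m) (linv m) = w.
Proof.
case/lastP: w => [|p a] hr.
  by rewrite rmul_nil -[ [:: m] ]/(rcons [::] m) rmul_rcons_inv.
case: (eqVneq m (linv a)) => [->|h]; last first.
  by rewrite rmul_rcons_other // rmul_rcons_inv.
rewrite rmul_rcons_inv linvK.
move: hr; rewrite reduced_rcons => /andP[_].
case/lastP: p => [|q b] //.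
have -> : (rcons q b == [::]) = false by case: q.
rewrite last_rcons /= => hb; rewrite rmul_rcons_other //.
Qed.

Lemma rmul_inj N (u w : word N) m : reduced u -> reduced w ->
  rmul u m = rmul w m -> u = w.
Proof. by move=> hu hw h; rewrite -(rmulK m hu) h rmulK. Qed.

Lemma size_rmul N (w : word N) m :
  size (rmul w m) = (size w).+1 \/ size w = (size (rmul w m)).+1.
Proof.
case: (rmul_cases w m) => h; first by left; rewrite h size_rcons.
by right; move: h; set u := rmul w m => ->; rewrite size_rcons.
Qed.

Lemma reduced_nth N (t : word N) x0 k : reduced t -> 0 < k < size t ->
  nth x0 t k != linv (nth x0 t k.-1).
Proof.
case: t => [|x s] hr /andP[hk hks]; first by [].
case: k hk hks => [|k] // _ hks.
have h := elimT (pathP x0) hr.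
exact: h k hks.
Qed.

Lemma rmul_take N (t : word N) x0 k : reduced t -> k < size t ->
  rmul (take k t) (nth x0 t k) = take k.+1 t.
Proof.
move=> hr hk; rewrite (take_nth x0 hk).
case: k hk => [|k] hk; first by rewrite take0.
rewrite (take_nth x0 (ltnW hk)) rmul_rcons_other //.
by apply: (reduced_nth x0 hr); rewrite /= hk.
Qed.

Lemma rmul_take_inv N (t : word N) x0 k : 0 < k <= size t ->
  rmul (take k t) (linv (nth x0 t k.-1)) = take k.-1 t.
Proof.
case: k => [|k] // /andP[_ hk] /=.
by rewrite (take_nth x0 hk) rmul_rcons_inv.
Qed.

Lemma card2 (A : finType) (X : {set A}) a b :
  a \in X -> b \in X -> a != b -> 1 < #|X|.
Proof.
move=> ha hb hab; have := subset_leq_card (_ : [set a; b] \subset X).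
rewrite cards2 hab; apply; apply/subsetP=> z; rewrite !inE.
by case/orP=> /eqP ->.
Qed.

Lemma card1_eq (A : finType) (X : {set A}) a b :
  #|X| <= 1 -> a \in X -> b \in X -> a = b.
Proof.
move=> h ha hb; apply/eqP; apply: contraTT h => hab.
by rewrite -ltnNge; apply: card2 ha hb hab.
Qed.

Lemma seq_max (A : eqType) (s : seq A) (f : A -> nat) x :
  x \in s -> exists2 t, t \in s & forall u, u \in s -> f u <= f t.
Proof.
elim: s x => [|y s IH] x //; rewrite inE.
case: s IH => [|z s] IH.
  by move=> _; exists y; rewrite ?inE // => u; rewrite inE => /eqP ->.
have [t ht htm] := IH z (mem_head _ _).
case: (leqP (f y) (f t)) => hyt _.
  exists t; first by rewrite inE ht orbT.
  by move=> u; rewrite inE => /orP[/eqP ->|]; [|apply: htm].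
exists y; first exact: mem_head.
move=> u; rewrite inE => /orP[/eqP ->//|/htm h]; exact: leq_trans h (ltnW hyt).
Qed.

Definition nbrs N (T : seq (word N)) (u : word N) := [set l : letter N | rmul u l \in T].

Lemma tdegE N (T : seq (word N)) u : tdeg T u = #|nbrs T u|.
Proof. by []. Qed.

Lemma leaf_exists N (T : seq (word N)) x : x \in T ->
  exists2 t, t \in T & tdeg T t <= 1.
Proof.
move=> hx; have [t ht hm] := seq_max (@size _) hx.
exists t => //; apply/card_le1_eqP => a b; rewrite !inE => ha hb.
have key : forall l, rmul t l \in T -> t = rcons (rmul t l) (linv l).
  move=> l hl; case: (rmul_cases t l) => // h.
  by have := hm _ hl; rewrite h size_rcons ltnn.
have ea := key _ ha; have eb := key _ hb.
apply: linv_inj; move: (congr1 (last (linv a)) ea) (congr1 (last (linv a)) eb).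
rewrite !last_rcons => h1 h2; exact: (etrans (esym h2) h1).
Qed.

Definition rooted N (T : seq (word N)) (rho : word N) :=
  [/\ rho \in T, all (@reduced N) T, forall t, t \in T -> take (size rho) t = rho
    & forall t k, t \in T -> size rho <= k -> take k t \in T].


Lemma rooted_size N (T : seq (word N)) rho t : rooted T rho -> t \in T ->
  size rho <= size t.
Proof.
case=> _ _ hp _ ht; have := congr1 size (hp t ht); rewrite size_take.
by case: ifP => [/ltnW|] // _ ->.
Qed.

Lemma rooted_neq N (T : seq (word N)) rho t : rooted T rho -> t \in T ->
  t != rho -> size rho < size t.
Proof.
move=> hR ht hne; rewrite ltn_neqAle (rooted_size hR ht) andbT.
apply: contra hne => /eqP e; case: hR => _ _ hp _.
by rewrite -(hp t ht) e take_size.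
Qed.

Lemma rooted_red N (T : seq (word N)) rho t : rooted T rho -> t \in T -> reduced t.
Proof. by case=> _ /allP h _ _; apply: h. Qed.

Lemma rooted_interior N (T : seq (word N)) rho t k : rooted T rho -> t \in T ->
  size rho < k < size t -> 1 < tdeg T (take k t).
Proof.
move=> hR ht /andP[h1 h2]; have hr := rooted_red hR ht.
case: hR => _ _ _ hk.
have x0 : letter N by move: h2; case: (t) => // x.
apply: (@card2 _ _ (nth x0 t k) (linv (nth x0 t k.-1))).
- by rewrite inE rmul_take // hk // ltnW // ltnW.
- rewrite inE rmul_take_inv; last by rewrite (leq_trans (leq_ltn_trans (leq0n _) h1)) // ltnW.
  by apply: hk => //; rewrite -ltnS (ltn_predK h1).
- by apply: reduced_nth => //; rewrite h2 (leq_ltn_trans (leq0n _) h1).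
Qed.

Lemma rooted_child N (T : seq (word N)) rho t x0 : rooted T rho -> t \in T ->
  size rho < size t ->
  rmul rho (nth x0 t (size rho)) = take (size rho).+1 t /\ take (size rho).+1 t \in T.
Proof.
move=> hR ht hs; have hr := rooted_red hR ht; case: (hR) => _ _ hp hk.
by rewrite -{1}(hp t ht) rmul_take // hk.
Qed.

Definition bisim N (T : seq (word N)) (S : word N -> word N -> Prop) :=
  [/\ forall u w, S u w -> [/\ u \in T, w \in T & u <> w],
      forall u w, S u w -> S w u &
      forall u w l, S u w -> rmul u l \in T -> rmul w l \in T /\ S (rmul u l) (rmul w l)].

Lemma bisim_tdeg N (T : seq (word N)) S u w : bisim T S -> S u w ->
  tdeg T u = tdeg T w.
Proof.
case=> _ hs hst huw; rewrite /tdeg; apply: eq_card => l; rewrite !inE.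
apply/idP/idP => h; first by case: (hst _ _ l huw h).
by case: (hst _ _ l (hs _ _ huw) h).
Qed.

Lemma G_main n N (T : seq (word N)) rho S : size T <= n -> rooted T rho ->
  bisim T S -> forall u w, ~ S u w.
Proof.
elim: n T rho S => [|n IH] T rho S hsz hR hB x y hxy.
  by case: hR => hr _ _ _; move: hsz; rewrite leqn0 => /nilP e; rewrite e in hr.
have hred := rooted_red hR.
case: (hB) => hin hsym hst.
have [xT yT xy] := hin _ _ hxy.
set T' := [seq t <- T | 1 < tdeg T t].
have T'E : forall t, (t \in T') = (t \in T) && (1 < tdeg T t).
  by move=> t; rewrite mem_filter andbC.
case: (boolP (has (fun t => 1 < tdeg T t) T)) => hT'; last first.
  have hle : forall t, t \in T -> tdeg T t <= 1.
    by move=> t ht; rewrite leqNgt; apply: contra hT' => h; apply/hasP; exists t.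
  have hsm : forall t, t \in T -> t != rho ->
      exists2 m, m \in nbrs T rho & rmul rho m = t.
    move=> t ht hne; have hs := rooted_neq hR ht hne.
    have x0 : letter N by move: hs; case: (t) => // z.
    have [h1 h2] := rooted_child x0 hR ht hs.
    exists (nth x0 t (size rho)); first by rewrite inE h1.
    rewrite h1; apply: take_oversize; rewrite leqNgt; apply/negP => hlt.
    have := rooted_interior hR ht (_ : size rho < (size rho).+1 < size t).
    by rewrite leqnn hlt => /(_ isT); rewrite ltnNge hle.
  have rhoT : rho \in T by case: hR.
  have hr := hred _ rhoT.
  have key : forall u w, S u w -> u = rho -> False.
    move=> u w huw eu; have [uT wT uw] := hin _ _ huw.
    have hne2 : w != rho by apply/eqP => ew; apply: uw; rewrite eu ew.
    have [m hm em] := hsm _ wT hne2.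
    have : rmul w (linv m) \in T by rewrite -em rmulK.
    move=> /(hst _ _ _ (hsym _ _ huw)) [h _].
    have : 1 < tdeg T rho.
      apply: (@card2 _ _ m (linv m)) => //; first by rewrite inE -eu.
      by rewrite eq_sym linv_neq.
    by rewrite ltnNge hle.
  case: (eqVneq x rho) => [ex|xne]; first exact: key hxy ex.
  case: (eqVneq y rho) => [ey|yne]; first exact: key _ _ (hsym _ _ hxy) ey.
  have [a ha ea] := hsm _ xT xne; have [b hb eb] := hsm _ yT yne.
  apply: xy; rewrite -ea -eb; congr rmul.
  exact: card1_eq (hle _ rhoT) ha hb.
case/hasP: hT' => t0 t0T ht0.
have rhoT : rho \in T by case: hR.
have hrk : forall t k, t \in T -> size rho <= k -> take k t \in T.
  by case: hR.
have hrp : forall t, t \in T -> take (size rho) t = rho by case: hR.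
have T'T : forall t, t \in T' -> t \in T by move=> t; rewrite T'E => /andP[].
have Tk : forall t k, t \in T' -> size rho < k -> take k t \in T'.
  move=> t k ht hk; case: (leqP (size t) k) => hkt; first by rewrite take_oversize.
  rewrite T'E hrk ?(T'T _ ht) ?(ltnW hk) //=.
  by apply: (rooted_interior hR (T'T _ ht)); rewrite hk hkt.
have uniq_child : tdeg T rho <= 1 -> forall t, t \in T -> size rho < size t ->
    take (size rho).+1 t = take (size rho).+1 t0.
  move=> hd t ht hs.
  have t0ne : t0 != rho by apply: contraTneq ht0 => ->; rewrite -leqNgt.
  have hs0 := rooted_neq hR t0T t0ne.
  have x0 : letter N by move: hs; case: (t) => // z.
  have [e1 i1] := rooted_child x0 hR ht hs.
  have [e2 i2] := rooted_child x0 hR t0T hs0.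
  rewrite -e1 -e2; congr rmul; apply: (card1_eq hd); by rewrite inE ?e1 ?e2.
pose rho' := if 1 < tdeg T rho then rho else take (size rho).+1 t0.
have hR' : rooted T' rho'.
  rewrite /rho'; case: ifP => hd.
    split.
    - by rewrite T'E rhoT hd.
    - by apply/allP => t /T'T; apply: hred.
    - by move=> t /T'T; apply: hrp.
    move=> t k ht; rewrite leq_eqVlt => /orP[/eqP <-|hk]; last exact: Tk.
    by rewrite hrp ?T'T // T'E rhoT hd.
  move/negbT: hd; rewrite -leqNgt => hd.
  have t0ne : t0 != rho by apply: contraTneq ht0 => ->; rewrite -leqNgt.
  have hs0 := rooted_neq hR t0T t0ne.
  have sz' : size (take (size rho).+1 t0) = (size rho).+1.
    by rewrite size_take; case: ltnP => // h; apply/eqP; rewrite eqn_leq h hs0.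
  have t0T' : t0 \in T' by rewrite T'E t0T.
  split.
  - exact: Tk.
  - by apply/allP => t /T'T; apply: hred.
  - move=> t ht; rewrite sz'; apply: uniq_child => //; first exact: T'T.
    apply: (rooted_neq hR (T'T _ ht)).
    by apply: contraTneq ht => ->; rewrite T'E negb_and -leqNgt hd orbT.
  - by move=> t k ht; rewrite sz' => hk; apply: Tk.
have hsz' : size T' <= n.
  have [t1 t1T ht1] := leaf_exists t0T.
  rewrite -ltnS (leq_trans _ hsz) // size_filter -(count_predC (fun t => 1 < tdeg T t) T).
  rewrite -[X in X < _]addn0 ltn_add2l -has_count; apply/hasP; exists t1 => //=.
  by rewrite -leqNgt.
pose S' u w := [/\ S u w, u \in T' & w \in T'].
have hB' : bisim T' S'.
  split.
  - move=> u w [h u' w']; have [_ _ uw] := hin _ _ h; by [].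
  - by move=> u w [h u' w']; split => //; apply: hsym.
  move=> u w l [h u' w'] hl; have [hwl hs] := hst _ _ _ h (T'T _ hl).
  have e := bisim_tdeg hB hs.
  have hwl' : rmul w l \in T' by rewrite T'E hwl -e; move: hl; rewrite T'E => /andP[].
  by split => //; split.
have reach : forall x, x \in T -> x \in T' \/ exists l, rmul x l \in T'.
  move=> z zT; case: (boolP (1 < tdeg T z)) => hz; first by left; rewrite T'E zT.
  right; rewrite -leqNgt in hz.
  case: (eqVneq z rho) => [ez|zne].
    have t0ne : t0 != rho by apply: contraTneq ht0 => ->; rewrite -leqNgt -ez.
    have hs0 := rooted_neq hR t0T t0ne.
    have x0 : letter N by move: hs0; case: (t0) => // w.
    exists (nth x0 t0 (size rho)); have [e1 i1] := rooted_child x0 hR t0T hs0.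
    by rewrite ez e1 Tk // T'E t0T.
  have hzs := rooted_neq hR zT zne.
  have hz0 : 0 < size z by apply: leq_ltn_trans hzs.
  have x0 : letter N by move: hz0; case: (z) => // w.
  exists (linv (nth x0 z (size z).-1)).
  rewrite -{1}(take_size z) rmul_take_inv ?hz0 ?leqnn //.
  case: (ltnP (size rho) (size z).-1) => hlt.
    rewrite T'E hrk ?(ltnW hlt) //=; apply: (rooted_interior hR zT).
    by rewrite hlt -ltnS prednK // leqnn.
  have ez : (size z).-1 = size rho.
    by apply/eqP; rewrite eqn_leq hlt -ltnS prednK.
  rewrite ez hrp //.
  case: (boolP (1 < tdeg T rho)) => hd; first by rewrite T'E rhoT hd.
  rewrite -leqNgt in hd.
  have := uniq_child hd _ zT hzs.
  rewrite -ez prednK // take_size => ez0.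
  have : z \in T' by rewrite ez0 -[X in take X]prednK // ez; apply: Tk; rewrite // T'E t0T.
  by rewrite T'E zT ltnNge hz.
have [x1 [y1 hxy1]] : exists x1 y1, S' x1 y1.
  case: (reach _ xT) => [x' | [l hl]].
    exists x, y; split => //; rewrite T'E yT -(bisim_tdeg hB hxy).
    by move: x'; rewrite T'E => /andP[].
  have [hyl hs] := hst _ _ _ hxy (T'T _ hl).
  exists (rmul x l), (rmul y l); split => //; rewrite T'E hyl -(bisim_tdeg hB hs).
  by move: hl; rewrite T'E => /andP[].
exact: (IH T' rho' S' hsz' hR' hB' x1 y1 hxy1).
Qed.

Lemma card_split N (P : letter N -> bool) :
  #|[set l : letter N | P l]| = #|[set a | P (a, true)]| + #|[set a | P (a, false)]|.
Proof.
have injt : injective (fun a : 'I_N => (a, true)) by move=> a b [].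
have injf : injective (fun a : 'I_N => (a, false)) by move=> a b [].
have -> : [set l : letter N | P l] =
   [set (a, true) | a in [set a | P (a, true)]] :|: [set (a, false) | a in [set a | P (a, false)]].
  apply/setP => -[a b]; rewrite !inE.
  case: b.
    rewrite (mem_imset _ _ injt) inE; apply/esym/orP; case: (P _) => /=; first by left.
    by case => //; case/imsetP => c _ [].
  rewrite (mem_imset _ _ injf) inE; apply/esym/orP; case: (P _) => /=; first by right.
  by case => //; case/imsetP => c _ [].
rewrite cardsU !card_imset //.
have -> : [set (a, true) | a in [set a | P (a, true)]] :&: [set (a, false) | a in [set a | P (a, false)]] = set0.
  apply/setP => -[a b]; rewrite !inE; apply/negP => /andP[/imsetP [c _ [_ ->]] /imsetP [d _ [_]]].
  by [].
by rewrite cards0 subn0.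
Qed.

Lemma prefix_closed N (T : seq (word N)) : subtree1 T ->
  forall t k, t \in T -> take k t \in T.
Proof.
case=> h0 hred hpath t k ht.
have [p [pp pl pa]] := hpath t ht.
suff : forall s, (forall k, take k s \in T) -> forall p, path (@adjX N) s p ->
   all (fun u => u \in T) p -> forall u, u \in p -> forall k, take k u \in T.
  move=> H; have : t \in [::] :: p by rewrite -pl mem_last.
  rewrite inE => /orP[/eqP ->|]; first by case: k.
  by move=> hu; apply: (H [::]) hu k => // j; case: j.
move=> {k t ht p pp pl pa} s hs p; elim: p s hs => [|h p IH] s hs //= /andP[hsh hp] /andP[hT hall].
have hh : forall k, take k h \in T.
  case/existsP: hsh => l /eqP eh; case: (rmul_cases s l); rewrite -eh => e.
    move=> k; rewrite e -cats1 take_cat; case: ltnP => _; first exact: hs.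
    case: (k - size s) => [|j]; first by rewrite cats0 -{1}(take_size s) hs.
    by rewrite /= cats1 -e.
  move=> k; case: (leqP k (size h)) => hk.
    by rewrite -(takel_cat [:: linv l] hk) cats1 -e hs.
  by rewrite take_oversize ?(ltnW hk).
move=> u; rewrite inE => /orP[/eqP ->|hu] //; exact: IH hh hp hall u hu.
Qed.



Lemma occ_local N r (Ti : seq (word N)) (V : finType) (e : 'I_N -> rel V) v f x :
  Rr r.+1 Ti -> core_graph e -> based_occ Ti e v f -> x \in Ti -> size x <= r ->
  (forall a w, e a (f x) w -> rmul x (a, true) \in Ti) /\
  (forall a u, e a u (f x) -> rmul x (a, false) \in Ti).
Proof.
case=> hsub hroot hleaf [hli hdeg] [hf0 hfe hfd] hx hs.
have hred : reduced x by case: hsub => _ /allP h _; apply: h.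
have hpre := prefix_closed hsub.
have h2 : 1 < tdeg Ti x.
  case/lastP E: x => [|p a]; first exact: hroot.
  have : linv a \in nbrs Ti x.
    rewrite inE E rmul_rcons_inv.
    have -> : p = take (size p) x by rewrite E -cats1 take_size_cat.
    exact: hpre.
  move=> ha; rewrite -E; have : 0 < tdeg Ti x by rewrite tdegE card_gt0; apply/set0Pn; exists (linv a).
  case H: (tdeg Ti x) => [|[|k]] // _.
  by have := hleaf _ hx H => hsz; move: hs; rewrite hsz ltnn.
have hgd := hfd x hx h2.
pose Ot := [set a | rmul x (a, true) \in Ti].
pose It := [set a | rmul x (a, false) \in Ti].
pose Od := [set a | [exists w, e a (f x) w]].
pose Id := [set a | [exists u, e a u (f x)]].
have e1 : tdeg Ti x = #|Ot| + #|It| by rewrite /tdeg card_split.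
have e2 : gdeg e (f x) = #|Od| + #|Id| by [].
have s1 : Ot \subset Od.
  apply/subsetP => a; rewrite !inE => ha; apply/existsP; exists (f (rmul x (a, true))).
  by apply: hfe; rewrite /tedge hx ha eqxx.
have s2 : It \subset Id.
  apply/subsetP => a; rewrite !inE => ha; apply/existsP; exists (f (rmul x (a, false))).
  apply: hfe; rewrite /tedge hx ha /=.
  by have := rmulK (a, false) hred => /= ->.
have c1 := subset_leq_card s1; have c2 := subset_leq_card s2.
have q1 : #|Ot| = #|Od| by lia.
have q2 : #|It| = #|Id| by lia.
have E1 := elimT (subset_cardP q1) s1; have E2 := elimT (subset_cardP q2) s2.
split.
  move=> a w hw; have : a \in Od by rewrite inE; apply/existsP; exists w.
  by rewrite -E1 inE.
move=> a u hu; have : a \in Id by rewrite inE; apply/existsP; exists u.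
by rewrite -E2 inE.
Qed.

Theorem mainTheorem11 (N : nat) (hN : 2 <= N) (r : nat)
    (T T1 T2 : seq (word N))
    (hT : subtree1 T) (hTr : forall w, w \in T -> size w <= r)
    (hT1 : Rr r.+1 T1) (hT2 : Rr r.+1 T2)
    (hcap : forall w, (w \in T) = (w \in T1) && (w \in T2))
    (V1 V2 : finType) (e1 : 'I_N -> rel V1) (e2 : 'I_N -> rel V2)
    (hD1 : core_graph e1) (hD2 : core_graph e2)
    (v1 : V1) (v2 : V2) (f1 : word N -> V1) (f2 : word N -> V2)
    (hf1 : based_occ T1 e1 v1 f1) (hf2 : based_occ T2 e2 v2 f2) :
  let F := fun x => (f1 x, f2 x) in
  [/\ {in T &, injective F},
      (forall p, connect (prod_adj e1 e2) (v1, v2) p <-> exists2 x, x \in T & p = F x) &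
      (forall a x y, x \in T -> y \in T ->
         (y == rmul x (a, true)) = prod_edge e1 e2 a (F x) (F y))].
Proof.
move=> F.
have hred : forall x, x \in T -> reduced x by case: hT => _ /allP.
have in1 : forall x, x \in T -> x \in T1 by move=> x; rewrite hcap => /andP[].
have in2 : forall x, x \in T -> x \in T2 by move=> x; rewrite hcap => /andP[].
have hE : forall a g, g \in T -> rmul g (a, true) \in T ->
    prod_edge e1 e2 a (F g) (F (rmul g (a, true))).
  move=> a g hg hh; case: hf1 => _ h1 _; case: hf2 => _ h2 _.
  by rewrite /prod_edge /= h1 ?h2 // /tedge ?in1 ?in2 ?eqxx.
have hKp : forall a x q, x \in T -> prod_edge e1 e2 a (F x) q ->
    rmul x (a, true) \in T /\ q = F (rmul x (a, true)).
  move=> a x [q1 q2] hx /andP [/= h1 h2].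
  have [l1a l1b] := occ_local hT1 hD1 hf1 (in1 _ hx) (hTr _ hx).
  have [l2a l2b] := occ_local hT2 hD2 hf2 (in2 _ hx) (hTr _ hx).
  have hxa : rmul x (a, true) \in T by rewrite hcap (l1a _ _ h1) (l2a _ _ h2).
  split => //; have /andP [/= g1 g2] := hE a x hx hxa.
  case: hD1 => li1 _; case: hD2 => li2 _.
  by rewrite /F ((li1 a).1 _ _ _ h1 g1) ((li2 a).1 _ _ _ h2 g2).
have hKm : forall a x q, x \in T -> prod_edge e1 e2 a q (F x) ->
    rmul x (a, false) \in T /\ q = F (rmul x (a, false)).
  move=> a x [q1 q2] hx /andP [/= h1 h2].
  have [l1a l1b] := occ_local hT1 hD1 hf1 (in1 _ hx) (hTr _ hx).
  have [l2a l2b] := occ_local hT2 hD2 hf2 (in2 _ hx) (hTr _ hx).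
  have hxa : rmul x (a, false) \in T by rewrite hcap (l1b _ _ h1) (l2b _ _ h2).
  have ex : rmul (rmul x (a, false)) (a, true) = x by have := rmulK (a, false) (hred _ hx).
  split => //; have := hE a _ hxa; rewrite ex => /(_ hx) /andP [/= g1 g2].
  case: hD1 => li1 _; case: hD2 => li2 _.
  by rewrite /F ((li1 a).2 _ _ _ h1 g1) ((li2 a).2 _ _ _ h2 g2).
pose S u w := [/\ u \in T, w \in T, u <> w & F u = F w].
have hB : bisim T S.
  split.
  - by move=> u w [].
  - by move=> u w [hu hw huw hF]; split => // e; apply: huw.
  move=> u w [a b] [hu hw huw hF] hl.
  have inj : rmul u (a, b) <> rmul w (a, b).
    by move/(rmul_inj (hred _ hu) (hred _ hw)).
  case: b hl inj => hl inj.
    have := hE a u hu hl; rewrite hF => /(hKp _ _ _ hw) [hwl e].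
    by split => //; split.
  have ex : rmul (rmul u (a, false)) (a, true) = u by have := rmulK (a, false) (hred _ hu).
  have := hE a _ hl; rewrite ex => /(_ hu); rewrite hF => /(hKm _ _ _ hw) [hwl e].
  by split => //; split.
have hroot : rooted T [::].
  split.
  - by case: hT.
  - by case: hT.
  - by move=> t _; rewrite take0.
  - by move=> t k ht _; apply: prefix_closed.
have injF : {in T &, injective F}.
  move=> x y hx hy hF; case: (eqVneq x y) => // hxy.
  by case: (G_main (leqnn _) hroot hB (_ : S x y)); split => //; apply/eqP.
have F0 : F [::] = (v1, v2) by case: hf1 => h1 _ _; case: hf2 => h2 _ _; rewrite /F h1 h2.
split => //.
- move=> pt; split.
  + case/connectP => s; rewrite -F0 => hs ->.
    have h0 : [::] \in T by case: hT.
    move: h0 hs; move: ([::] : word N) => x0.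
    elim: s x0 => [|q s IH] x /= hx hs; first by exists x.
    case/andP: hs => /existsP [a /orP [h|h]] hs.
      have [hxa eq] := hKp _ _ _ hx h; rewrite eq in hs *; exact: IH hxa hs.
    have [hxa eq] := hKm _ _ _ hx h; rewrite eq in hs *; exact: IH hxa hs.
  + case=> x hx ->; case: hT => h0 _ hpath.
    have [p [pp pl pa]] := hpath x hx.
    apply/connectP; exists (map F p); last by rewrite -F0 last_map pl.
    rewrite -F0; elim: p [::] h0 pp pa {pl} => [|h p IH] g hg //= /andP [hgh hp] /andP [hh ha].
    rewrite IH // andbT; case/existsP: hgh => [[a b] /eqP eh].
    apply/existsP; exists a; case: b eh => eh; first by rewrite eh hE // -eh.
    have ex : rmul h (a, true) = g by rewrite eh; have := rmulK (a, false) (hred _ hg).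
    by rewrite -ex hE ?orbT // ex.
- move=> a x y hx hy; apply/idP/idP => [/eqP e|h].
    by rewrite e; apply: hE => //; rewrite -e.
  by have [hxa /injF ->] := hKp _ _ _ hx h.
Qed.
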